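(* Let $G$ be a graph, $R$ a connected subset of $V(G)$, $v_0\in V(G)$, and $P$ a shortest path from $v_0$ to $R$. Then the number of milestones of $P$ is at most $|R|^2+1$.
   Context: $G$ is an unweighted undirected graph with shortest-path distance $\mathrm{dist}$; $R$ is connected if $G[R]$ is connected. A shortest path from $v_0$ to $R$ is a path of length $\min_{y\in R}\mathrm{dist}(v_0,y)$ from $v_0$ to a vertex of $R$; let $x$ be its unique vertex in $R$. Order $V(P)$ by $v\le_P u$ iff $u$ lies on the subpath of $P$ from $v$ to $x$. For $z\in V(G)$, the distance profile $\operatorname{prof}_{R,x}[z]\colon R\to\mathbb{Z}$ is $\operatorname{prof}_{R,x}[z](s)=\mathrm{dist}(z,s)-\mathrm{dist}(z,x)$. A vertex $v\in V(P)$ is a milestone of $P$ if $v=x$ or $\operatorname{prof}_{R,x}[v]\ne\operatorname{prof}_{R,x}[u]$ where $u$ is the successor of $v$ in $\le_P$. *)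

(* Defs.v *)
From mathcomp Require Import all_boot all_order all_algebra.
Set Implicit Arguments. Unset Strict Implicit. Unset Printing Implicit Defensive.
Import GRing.Theory Num.Theory.

(* A walk from x is a sequence p with path e x p; it goes from x to last x p
   and has length size p. *)

Section Graph.
Variables (T : finType) (e : rel T).

Definition reach_le (k : nat) (x y : T) : bool :=
  [exists k' : 'I_k.+1, [exists p : k'.-tuple T, path e x p && (last x p == y)]].

(* A shortest walk has length < #|T|; if y is unreachable the value is #|T|
   (a placeholder for infinity, never used in the theorem, where all relevant
   distances are finite). *)
Definition dist (x y : T) : nat := find (fun k => reach_le k x y) (iota 0 #|T|).

Definition connected_set (R : {set T}) : Prop :=
  forall a b, a \in R -> b \in R ->
    connect [rel u v | [&& e u v, u \in R & v \in R]] a b.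

Definition shortest_path_to (R : {set T}) (v0 : T) (p : seq T) : Prop :=
  [/\ path e v0 p, last v0 p \in R &
      forall q : seq T, path e v0 q -> last v0 q \in R -> size p <= size q].

Definition prof (R : {set T}) (x z : T) (s : T) : int :=
  (dist z s)%:Z - (dist z x)%:Z.

Definition prof_neq (R : {set T}) (x z u : T) : bool :=
  [exists s in R, prof R x z s != prof R x u s].

(* Milestones of the path P = v0 :: p with endpoint x = last v0 p.
   The successor of v in <=_P is the next vertex of P after v (towards x). *)
Definition milestones (R : {set T}) (v0 : T) (p : seq T) : {set T} :=
  let P := v0 :: p in
  let x := last v0 p in
  [set v in P | (v == x) || prof_neq R x v (nth v P (index v P).+1)].

End Graph.

(* Main.v *)
Require Import Defs.
From mathcomp Require Import all_boot all_order all_algebra.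
From mathcomp Require Import zify.
Set Implicit Arguments. Unset Strict Implicit.

Lemma dist_leT (T : finType) (e : rel T) a b : dist e a b <= #|T|.
Proof. by rewrite /dist; have := find_size (fun k => reach_le e k a b) (iota 0 #|T|); rewrite size_iota. Qed.

Lemma dist_le (T : finType) (e : rel T) a q :
  path e a q -> dist e a (last a q) <= size q.
Proof.
move=> pq.
have hr : reach_le e (size q) a (last a q).
  apply/existsP; exists (Ordinal (ltnSn (size q))); apply/existsP.
  exists (in_tuple q); by rewrite /= pq eqxx.
case: (ltnP (size q) #|T|) => hk; last by apply: leq_trans (dist_leT _ _ _) hk.
rewrite leqNgt; apply/negP => hlt.
have := before_find 0 hlt; rewrite nth_iota // add0n hr //.
Qed.

Lemma dist_walk (T : finType) (e : rel T) a b : dist e a b < #|T| ->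
  exists2 q, path e a q & (last a q == b) && (size q <= dist e a b).
Proof.
move=> hlt.
have hh : has (fun k => reach_le e k a b) (iota 0 #|T|) by rewrite has_find size_iota.
have := nth_find 0 hh; rewrite -/(dist e a b) nth_iota // add0n.
case/existsP => k /existsP [t /andP [pt lt]].
exists (val t) => //; rewrite lt size_tuple /=; by case: k {t pt lt}.
Qed.

Lemma shorten_walk (T : finType) (e : rel T) a q : path e a q ->
  exists2 q', path e a q' & [/\ last a q' = last a q, size q' <= size q,
     size q' < #|T|, {subset a :: q' <= a :: q} & uniq (a :: q')].
Proof.
move=> pq; case: (shortenP pq) => q' pq' uq sub.
exists q' => //; split => //.
- by case/andP: uq => _ uq'; exact: uniq_leq_size uq' sub.
- by rewrite -ltnS -[(size q').+1]/(size (a :: q')) -(card_uniqP uq); exact: max_card.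
- by move=> y; rewrite !inE => /predU1P [->|/sub ->]; rewrite ?eqxx ?orbT.
Qed.

Lemma dist_lt (T : finType) (e : rel T) a q :
  path e a q -> dist e a (last a q) < #|T|.
Proof.
move=> /shorten_walk [q' pq' [lq _ hs _ _]].
by rewrite -lq; apply: leq_ltn_trans (dist_le pq') hs.
Qed.

Lemma dist_tri (T : finType) (e : rel T) a b c :
  dist e a c <= dist e a b + dist e b c.
Proof.
case: (ltnP (dist e a b) #|T|) => h1; last first.
  by apply: leq_trans (dist_leT _ _ _) (leq_trans h1 (leq_addr _ _)).
case: (ltnP (dist e b c) #|T|) => h2; last first.
  by apply: leq_trans (dist_leT _ _ _) (leq_trans h2 (leq_addl _ _)).
case: (dist_walk h1) => q1 p1 /andP [/eqP l1 s1].
case: (dist_walk h2) => q2 p2 /andP [/eqP l2 s2].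
have : path e a (q1 ++ q2) by rewrite cat_path p1 l1.
move/dist_le; rewrite last_cat l1 l2 size_cat => h.
apply: leq_trans h _; exact: leq_add.
Qed.

Lemma last_take_nth (T : Type) (v0 : T) p i : i <= size p ->
  last v0 (take i p) = nth v0 (v0 :: p) i.
Proof.
move=> hi; rewrite (last_nth v0) size_takel //.
by case: i hi => [|i] hi //=; rewrite nth_take.
Qed.

Lemma count_incr (f : nat -> nat) (Q : pred nat) n :
  (forall i, i < n -> f i <= f i.+1) ->
  (forall i, i < n -> Q i -> f i < f i.+1) ->
  count Q (iota 0 n) + f 0 <= f n.
Proof.
elim: n => [|n IH] hm hs; first by [].
have -> : iota 0 n.+1 = iota 0 n ++ [:: n] by rewrite -addn1 iotaD.
rewrite count_cat /= addn0.
have := IH (fun i hi => hm i (ltnW hi)) (fun i hi => hs i (ltnW hi)).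
have := hm n (ltnSn n); have := hs n (ltnSn n).
case: (Q n) => /=; [move=> /(_ isT)|move=> _]; lia.
Qed.

Lemma path_allR (T : finType) (e : rel T) (R : {set T}) a q :
  path [rel u v | [&& e u v, u \in R & v \in R]] a q -> all (mem R) q.
Proof.
elim: q a => [|b q IH] a //= /andP [/and3P [_ _ bR] pq].
by rewrite bR (IH b pq).
Qed.

Lemma prof_neq_refl (T : finType) (e : rel T) R x v : prof_neq e R x v v = false.
Proof. by apply/existsP => [[s /andP [_ /eqP]]]. Qed.

Unset Implicit Arguments.

Theorem lemma3p2 (T : finType) (e : rel T)
  (e_sym : symmetric e) (e_irr : irreflexive e)
  (R : {set T}) (v0 : T) (p : seq T) :
  connected_set e R ->
  shortest_path_to e R v0 p ->
  #|milestones e R v0 p| <= #|R| ^ 2 + 1.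
Proof.
move=> conn [pp xR minp].
set x := last v0 p; set n := size p.
pose P i := nth v0 (v0 :: p) i.
have Pe : forall i, i < n -> e (P i) (P i.+1).
  by move=> i hi; move/(pathP v0): pp => h; exact: h.
have suf : forall i, i <= n -> [/\ path e (P i) (drop i p),
    last (P i) (drop i p) = x & size (drop i p) = n - i].
  move=> i hi; rewrite /P -last_take_nth //.
  have := pp; rewrite -{1}(cat_take_drop i p) cat_path => /andP [_ h].
  by split => //; rewrite ?size_drop // -last_cat cat_take_drop.
have pre : forall i q, i <= n -> path e (P i) q -> last (P i) q \in R ->
    n <= i + size q.
  move=> i q hi pq lq.
  have := minp (take i p ++ q).
  rewrite cat_path last_cat last_take_nth // size_cat size_takel // -/(P i).
  apply; last by [].
  rewrite pq andbT.
  by have := pp; rewrite -{1}(cat_take_drop i p) cat_path => /andP [].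
have nT : n < #|T|.
  case: (shorten_walk pp) => q' pq' [lq _ hs _ _].
  by apply: leq_ltn_trans hs; apply: minp => //; rewrite lq.
have lower : forall i s, i <= n -> s \in R -> n - i <= dist e (P i) s.
  move=> i s hi sR.
  case: (ltnP (dist e (P i) s) #|T|) => h; last first.
    by apply: leq_trans h; apply: leq_trans (leq_subr _ _) (ltnW nT).
  case: (dist_walk h) => q pq /andP [/eqP lq sq].
  have := pre i q hi pq; rewrite lq => /(_ sR) hh; lia.
have dx : forall i, i <= n -> dist e (P i) x = n - i.
  move=> i hi; apply/eqP; rewrite eqn_leq lower // andbT.
  by case: (suf i hi) => ps ls ss; rewrite -{1}ls -ss; apply: dist_le.
have edge : forall i, i < n -> forall s, dist e (P i) s <= (dist e (P i.+1) s).+1.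
  move=> i hi s; apply: leq_trans (dist_tri _ _ (P i.+1) _) _.
  have : dist e (P i) (P i.+1) <= 1.
    by have := @dist_le _ e (P i) [:: P i.+1]; rewrite /= Pe // => /(_ isT).
  lia.
pose f i := \sum_(s in R) (dist e (P i) s - dist e (P i) x).
have mono : forall i, i < n -> f i <= f i.+1.
  move=> i hi; apply: leq_sum => s sR.
  have := edge i hi s; have := lower i.+1 s hi sR; have := dx i (ltnW hi);
  have := dx i.+1 hi; lia.
have strict : forall i, i < n -> prof_neq e R x (P i) (P i.+1) -> f i < f i.+1.
  move=> i hi /existsP [s /andP [sR /eqP neq]].
  rewrite /f (bigD1 s sR) [X in _ < X](bigD1 s sR) /= -addSn.
  apply: leq_add.
    move: neq; rewrite /prof.
    have := edge i hi s; have := lower i.+1 s hi sR; have := lower i s (ltnW hi) sR;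
    have := dx i (ltnW hi); have := dx i.+1 hi; lia.
  apply: leq_sum => s' /andP [sR' _].
  have := edge i hi s'; have := lower i.+1 s' hi sR'; have := dx i (ltnW hi);
  have := dx i.+1 hi; lia.
have Pn : P n = x by rewrite /P /x (last_nth v0).
have dR : forall s, s \in R -> dist e x s <= #|R|.
  move=> s sR; case/connectP: (conn x s xR sR) => q pq ->.
  case: (shorten_walk pq) => q' pq' [lq _ _ _ uq].
  rewrite -lq.
  have pe : path e x q'.
    by apply: sub_path pq' => u v /and3P [].
  apply: leq_trans (dist_le pe) _.
  apply: ltnW; rewrite -ltnS -[(size q').+1]/(size (x :: q')) -(card_uniqP uq).
  apply: subset_leq_card; apply/subsetP => y; rewrite inE => /predU1P [->//|].
  by move: y; apply/allP; apply: path_allR pq'.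
have fn : f n <= #|R| * #|R|.
  rewrite /f Pn -sum_nat_const; apply: leq_sum => s sR.
  by apply: leq_trans (leq_subr _ _) (dR s sR).
pose Q i := prof_neq e R x (P i) (P i.+1).
have cnt := @count_incr f Q n mono strict.
have sub : milestones e R v0 p \subset (x :: [seq P i | i <- iota 0 n & Q i]).
  apply/subsetP => v; rewrite inE /= => /andP [vP /orP [/eqP ->|hneq]].
    by rewrite inE eqxx.
  rewrite inE; apply/orP; right.
  set i := index v (v0 :: p) in hneq *.
  have hi : i < n.+1 by rewrite /i index_mem.
  have vi : P i = v by rewrite /P /i nth_index.
  case: (ltnP i n) => hin; last first.
    have ii : i = n by lia.
    by move: hneq; rewrite nth_default ?prof_neq_refl //= -/n ii.
  rewrite (set_nth_default v0) /= -/n // in hneq.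
  apply/mapP; exists i; last by rewrite vi.
  rewrite mem_filter mem_iota /= hin andbT /Q.
  by rewrite vi.
apply: leq_trans (subset_leq_card sub) _.
apply: leq_trans (card_size _) _.
rewrite /= size_map size_filter -mulnn; change (count Q (iota 0 n) < #|R| * #|R| + 1); lia.
Qed.
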